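(* Let $Q$ be a quantale, $M$ a shrinkable $Q$-module and $\mathcal{F},\mathcal{G}\in\operatorname{mF}(Q)$. For $a,b\in M$ and $n,m\in\mathbb{N}$ (with $n,m\ge1$), if $a\preceq^n_\mathcal{F}b$ and $a\preceq^m_\mathcal{G}b$, then $a\preceq^{n+m-1}_{\mathcal{F}\cap\mathcal{G}}b$.
   Context: A quantale is a poset $Q$ in which every nonempty subset has a join $\sum$ (binary join $a+b$; no bottom required), with top $1$ and a commutative associative multiplication with unit $1$ distributing over nonempty joins. A $Q$-module is a poset $M$ with all nonempty joins and an associative unital action $Q\times M\to M$ distributing over nonempty joins in each variable. A multiplicative filter (m-filter) is a subset $\mathcal{F}\subseteq Q$ containing $1$, upward closed and closed under multiplication; $\operatorname{mF}(Q)$ is the set of m-filters. For $x,x_i$ write $x\le^*\sum_{i\in I}x_i$ if $x\le\sum_{i\in I_0}x_i$ for some finite nonempty $I_0\subseteq I$. $M$ is shrinkable if whenever $x\le\sum_{i\in I}x_i$ in $M$ there is a family $(y_j)_{j\in J}$ with $x=\sum_jy_j$ and $y_j\le^*\sum_ix_i$ for all $j$. For $a,b\in M$, $a\preceq^1_\mathcal{F}b$ means there are families $(a_i)_{i\in I}$ in $M$ and $(s_i)_{i\in I}$ in $\mathcal{F}$ with $a\le\sum_ia_i$ and $s_ia_i\le b$ for all $i$; $a\preceq^n_\mathcal{F}b$ ($n\ge1$) means there exist $c_1,\dots,c_{n-1}\in M$ with $a\preceq^1_\mathcal{F}c_1\preceq^1_\mathcal{F}\cdots\preceq^1_\mathcal{F}c_{n-1}\preceq^1_\mathcal{F}b$.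 *)

(* Defs.v *)
From Stdlib Require Import List.

Definition is_lub {T : Type} (le : T -> T -> Prop) (S : T -> Prop) (x : T) : Prop :=
  (forall y, S y -> le y x) /\ (forall z, (forall y, S y -> le y z) -> le x z).

Definition nonempty {T : Type} (S : T -> Prop) : Prop := exists x, S x.

Record Quantale := {
  qcar :> Type;
  qle : qcar -> qcar -> Prop;
  qle_refl : forall x, qle x x;
  qle_trans : forall x y z, qle x y -> qle y z -> qle x z;
  qle_antisym : forall x y, qle x y -> qle y x -> x = y;
  qsup : (qcar -> Prop) -> qcar;
  qsup_lub : forall S, nonempty S -> is_lub qle S (qsup S);
  qone : qcar;
  qone_top : forall x, qle x qone;
  qmul : qcar -> qcar -> qcar;
  qmulC : forall x y, qmul x y = qmul y x;
  qmulA : forall x y z, qmul x (qmul y z) = qmul (qmul x y) z;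
  qmul1 : forall x, qmul qone x = x;
  qmul_sup : forall a S, nonempty S ->
    qmul a (qsup S) = qsup (fun y => exists x, S x /\ y = qmul a x)
}.

Record QModule (Q : Quantale) := {
  mcar :> Type;
  mle : mcar -> mcar -> Prop;
  mle_refl : forall x, mle x x;
  mle_trans : forall x y z, mle x y -> mle y z -> mle x z;
  mle_antisym : forall x y, mle x y -> mle y x -> x = y;
  msup : (mcar -> Prop) -> mcar;
  msup_lub : forall S, nonempty S -> is_lub mle S (msup S);
  act : qcar Q -> mcar -> mcar;
  act_assoc : forall r s x, act (qmul Q r s) x = act r (act s x);
  act_one : forall x, act (qone Q) x = x;
  act_supl : forall (S : qcar Q -> Prop) x, nonempty S ->
    act (qsup Q S) x = msup (fun y => exists r, S r /\ y = act r x);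
  act_supr : forall r (S : mcar -> Prop), nonempty S ->
    act r (msup S) = msup (fun y => exists x, S x /\ y = act r x)
}.

Arguments mle {Q} _ _ _.
Arguments msup {Q} _ _.
Arguments act {Q} _ _ _.

Definition mfilter (Q : Quantale) (F : qcar Q -> Prop) : Prop :=
  F (qone Q) /\
  (forall x y, F x -> qle Q x y -> F y) /\
  (forall x y, F x -> F y -> F (qmul Q x y)).

(* join of a family (x_i)_{i in I}; used only for inhabited I *)
Definition fsum {Q : Quantale} (M : QModule Q) {I : Type} (f : I -> M) : M :=
  msup M (fun y => exists i, y = f i).

(* x <=* sum_i x_i : x is below the join over some finite nonempty I0 ⊆ I,
   I0 given as a nonempty list of indices *)
Definition le_star {Q : Quantale} (M : QModule Q) (x : M) {I : Type} (f : I -> M) : Prop :=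
  exists l : list I, l <> nil /\
    mle M x (msup M (fun y => exists i, In i l /\ y = f i)).

Definition shrinkable {Q : Quantale} (M : QModule Q) : Prop :=
  forall (x : M) (I : Type) (f : I -> M), inhabited I ->
    mle M x (fsum M f) ->
    exists (J : Type) (g : J -> M), inhabited J /\ x = fsum M g /\
      forall j, le_star M (g j) f.

Definition prec1 {Q : Quantale} (M : QModule Q) (F : qcar Q -> Prop) (a b : M) : Prop :=
  exists (I : Type) (ai : I -> M) (si : I -> qcar Q), inhabited I /\
    mle M a (fsum M ai) /\ (forall i, F (si i)) /\
    (forall i, mle M (act M (si i) (ai i)) b).

(* chain of k+1 steps of <=^1_F (k intermediate elements) *)
Fixpoint prec_chain {Q : Quantale} (M : QModule Q) (F : qcar Q -> Prop) (k : nat) (a b : M) : Prop :=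
  match k with
  | O => prec1 M F a b
  | S k' => exists c, prec1 M F a c /\ prec_chain M F k' c b
  end.

(* a <=^n_F b, meaningful for n >= 1 *)
Definition precn {Q : Quantale} (M : QModule Q) (F : qcar Q -> Prop) (n : nat) (a b : M) : Prop :=
  prec_chain M F (n - 1) a b.

(* Main.v *)
Require Import Defs.
From Stdlib Require Import List Lia.

Ltac sp := repeat match goal with |- _ /\ _ => split end.

Lemma le_msup {Q : Quantale} (M : QModule Q) (S : M -> Prop) y :
  S y -> mle M y (msup M S).
Proof. intro H. apply (proj1 (msup_lub Q M S (ex_intro _ y H))). exact H. Qed.

Lemma msup_le {Q : Quantale} (M : QModule Q) (S : M -> Prop) z :
  nonempty S -> (forall y, S y -> mle M y z) -> mle M (msup M S) z.
Proof. intros Hn H. apply (proj2 (msup_lub Q M S Hn)). exact H. Qed.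

Lemma mtr {Q : Quantale} (M : QModule Q) (x y z : M) : mle M x y -> mle M y z -> mle M x z.
Proof. apply mle_trans. Qed.

Definition mj {Q : Quantale} (M : QModule Q) (u v : M) := msup M (fun y => y = u \/ y = v).

Lemma mj_l {Q : Quantale} (M : QModule Q) u v : mle M u (mj M u v).
Proof. apply le_msup. auto. Qed.
Lemma mj_r {Q : Quantale} (M : QModule Q) u v : mle M v (mj M u v).
Proof. apply le_msup. auto. Qed.
Lemma mj_le {Q : Quantale} (M : QModule Q) u v z :
  mle M u z -> mle M v z -> mle M (mj M u v) z.
Proof. intros. apply msup_le. exists u; auto. intros y [->| ->]; auto. Qed.

Lemma act_mono_r {Q : Quantale} (M : QModule Q) r (x y : M) :
  mle M x y -> mle M (act M r x) (act M r y).
Proof.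
  intro H.
  assert (e : mj M x y = y).
  { apply mle_antisym. apply mj_le; auto. apply mle_refl. apply mj_r. }
  pose proof (act_supr Q M r (fun y0 => y0 = x \/ y0 = y) (ex_intro _ x (or_introl eq_refl))) as E.
  fold (mj M x y) in E. rewrite e in E. rewrite E.
  apply le_msup. exists x. auto.
Qed.

Lemma act_mono_l {Q : Quantale} (M : QModule Q) (r r' : Q) (x : M) :
  qle Q r r' -> mle M (act M r x) (act M r' x).
Proof.
  intro H.
  assert (e : qsup Q (fun y => y = r \/ y = r') = r').
  { apply qle_antisym.
    - apply (proj2 (qsup_lub Q _ (ex_intro _ r (or_introl eq_refl)))).
      intros y [->| ->]; auto. apply qle_refl.
    - apply (proj1 (qsup_lub Q _ (ex_intro _ r (or_introl eq_refl)))). auto. }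
  pose proof (act_supl Q M (fun y0 => y0 = r \/ y0 = r') x (ex_intro _ r (or_introl eq_refl))) as E.
  rewrite e in E. rewrite E.
  apply le_msup. exists r. auto.
Qed.

Lemma act_le {Q : Quantale} (M : QModule Q) r (x : M) : mle M (act M r x) x.
Proof.
  pose proof (act_mono_l M r (qone Q) x (qone_top Q r)) as H.
  rewrite act_one in H. exact H.
Qed.

Lemma prec1_mono_r {Q : Quantale} (M : QModule Q) H (a c c' : M) :
  prec1 M H a c -> mle M c c' -> prec1 M H a c'.
Proof.
  intros (I & ai & si & Hi & H1 & H2 & H3) Hc.
  exists I, ai, si. sp; auto. intro i. eapply mtr; eauto.
Qed.

Lemma prec1_mono_l {Q : Quantale} (M : QModule Q) H (a a' c : M) :
  mle M a' a -> prec1 M H a c -> prec1 M H a' c.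
Proof.
  intros Ha (I & ai & si & Hi & H1 & H2 & H3).
  exists I, ai, si. sp; auto. eapply mtr; eauto.
Qed.

Lemma chain_mono_l {Q : Quantale} (M : QModule Q) H k (a a' b : M) :
  mle M a' a -> prec_chain M H k a b -> prec_chain M H k a' b.
Proof.
  destruct k; simpl; intros Ha Hc.
  - eapply prec1_mono_l; eauto.
  - destruct Hc as [c [H1 H2]]. exists c. split; auto. eapply prec1_mono_l; eauto.
Qed.

Lemma prec1_le {Q : Quantale} (M : QModule Q) (H : qcar Q -> Prop) (u b : M) :
  H (qone Q) -> mle M u b -> prec1 M H u b.
Proof.
  intros H1 Hu. exists unit, (fun _ => u), (fun _ => qone Q).
  sp; auto.
  - exact (inhabits tt).
  - apply le_msup. exists tt. auto.
  - intros _. rewrite act_one. auto.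
Qed.

Lemma chain_le {Q : Quantale} (M : QModule Q) (H : qcar Q -> Prop) k (u b : M) :
  H (qone Q) -> mle M u b -> prec_chain M H k u b.
Proof.
  revert u. induction k; simpl; intros u H1 Hu.
  - apply prec1_le; auto.
  - exists b. split. apply prec1_le; auto. apply IHk; auto. apply mle_refl.
Qed.

Lemma prec1_join {Q : Quantale} (M : QModule Q) H (u v c1 c2 : M) :
  prec1 M H u c1 -> prec1 M H v c2 -> prec1 M H (mj M u v) (mj M c1 c2).
Proof.
  intros (I & ai & si & [i0] & H1 & H2 & H3) (J & bj & tj & [j0] & K1 & K2 & K3).
  exists (I + J)%type, (fun p => match p with inl i => ai i | inr j => bj j end),
    (fun p => match p with inl i => si i | inr j => tj j end).
  sp.
  - exact (inhabits (inl i0)).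
  - apply mj_le.
    + eapply mtr; [exact H1|]. apply msup_le. exists (ai i0); exists i0; auto.
      intros y [i ->]. apply le_msup. exists (inl i). auto.
    + eapply mtr; [exact K1|]. apply msup_le. exists (bj j0); exists j0; auto.
      intros y [j ->]. apply le_msup. exists (inr j). auto.
  - intros [i|j]; auto.
  - intros [i|j]. eapply mtr; [apply H3|apply mj_l]. eapply mtr; [apply K3|apply mj_r].
Qed.

Lemma chain_join {Q : Quantale} (M : QModule Q) H k (u v b : M) :
  prec_chain M H k u b -> prec_chain M H k v b -> prec_chain M H k (mj M u v) b.
Proof.
  revert u v. induction k; simpl; intros u v Hu Hv.
  - eapply prec1_mono_r. apply prec1_join; eauto. apply mj_le; apply mle_refl.
  - destruct Hu as [c1 [A1 B1]]. destruct Hv as [c2 [A2 B2]].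
    exists (mj M c1 c2). split. apply prec1_join; auto. apply IHk; auto.
Qed.

Lemma fin_prod {Q : Quantale} (M : QModule Q) (F : qcar Q -> Prop) {I : Type}
  (f : I -> M) (si : I -> qcar Q) (c y : M) :
  mfilter Q F -> (forall i, F (si i)) -> (forall i, mle M (act M (si i) (f i)) c) ->
  le_star M y f -> exists s, F s /\ mle M (act M s y) c.
Proof.
  intros [F1 [Fup Fmul]] HF Hc [l [Hl Hy]].
  assert (Hs : exists s, F s /\ forall i, In i l -> mle M (act M s (f i)) c).
  { clear Hl Hy. induction l as [|i l IH].
    - exists (qone Q). split; auto. intros i [].
    - destruct IH as [s [Fs Hs]]. exists (qmul Q s (si i)). split; auto.
      intros j [<-|Hj].
      + rewrite act_assoc. eapply mtr; [apply act_le|]. apply Hc.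
      + rewrite qmulC, act_assoc. eapply mtr; [apply act_le|]. apply Hs; auto. }
  destruct Hs as [s [Fs Hs]]. exists s. split; auto.
  assert (Hne : nonempty (fun y0 => exists i, In i l /\ y0 = f i)).
  { destruct l as [|i l]; [congruence|]. exists (f i). exists i. simpl; auto. }
  eapply mtr. apply act_mono_r. exact Hy.
  rewrite act_supr by exact Hne.
  apply msup_le.
  - destruct Hne as [z Hz]. exists (act M s z). exists z; auto.
  - intros w [z [[i [Hi ->]] ->]]. apply Hs; auto.
Qed.

Definition Pz {Q : Quantale} (M : QModule Q) (F G : qcar Q -> Prop) (x c d z : M) s t :=
  F s /\ G t /\ mle M (act M s z) c /\ mle M (act M t z) d /\ mle M z x.

Lemma decomp {Q : Quantale} (M : QModule Q) (F G : qcar Q -> Prop) (x c d : M) :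
  shrinkable M -> mfilter Q F -> mfilter Q G ->
  prec1 M F x c -> prec1 M G x d ->
  nonempty (fun z => exists s t, Pz M F G x c d z s t) /\
  mle M x (msup M (fun z => exists s t, Pz M F G x c d z s t)).
Proof.
  intros Hsh HF HG (I & ai & si & Hi & H1 & H2 & H3) (J & bj & tj & Hj & K1 & K2 & K3).
  destruct (Hsh x I ai Hi H1) as (J1 & g & [j1] & Eg & Hg).
  assert (Hgx : forall j, mle M (g j) x).
  { intro j. rewrite Eg. apply le_msup. exists j. auto. }
  assert (Hsub : forall j, exists (J' : Type) (h : J' -> M), inhabited J' /\ g j = fsum M h /\
     forall j', exists s t, Pz M F G x c d (h j') s t).
  { intro j. destruct (fin_prod M F ai si c (g j) HF H2 H3 (Hg j)) as [s [Fs Hs]].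
    destruct (Hsh (g j) J bj Hj (mtr M _ _ _ (Hgx j) K1)) as (J' & h & Hin & Eh & Hh).
    exists J', h. sp; auto.
    intro j'. destruct (fin_prod M G bj tj d (h j') HG K2 K3 (Hh j')) as [t [Gt Ht]].
    assert (hle : mle M (h j') (g j)) by (rewrite Eh; apply le_msup; exists j'; auto).
    exists s, t. unfold Pz. sp; auto.
    - eapply mtr; [apply act_mono_r; exact hle| exact Hs].
    - eapply mtr; eauto. }
  split.
  - destruct (Hsub j1) as (J' & h & [j'] & _ & Hh). exists (h j'). apply Hh.
  - rewrite Eg at 1. apply msup_le. exists (g j1). exists j1. auto.
    intros y [j ->]. destruct (Hsub j) as (J' & h & [j'] & Eh & Hh).
    rewrite Eh. apply msup_le. exists (h j'). exists j'. auto.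
    intros w [k ->]. apply le_msup. apply Hh.
Qed.

Lemma key {Q : Quantale} (M : QModule Q) (F G : qcar Q -> Prop) (x c d : M) :
  shrinkable M -> mfilter Q F -> mfilter Q G ->
  prec1 M F x c -> prec1 M G x d ->
  exists YF YG, mle M YF c /\ mle M YF x /\ mle M YG d /\ mle M YG x /\
    prec1 M (fun r => F r /\ G r) x (mj M YF YG).
Proof.
  intros Hsh HF HG P1 P2.
  destruct (decomp M F G x c d Hsh HF HG P1 P2) as [[z0 Hz0] Hx].
  set (Z := fun z => exists s t, Pz M F G x c d z s t) in *.
  set (YF := msup M (fun y => exists z s t, Pz M F G x c d z s t /\ y = act M s z)).
  set (YG := msup M (fun y => exists z s t, Pz M F G x c d z s t /\ y = act M t z)).
  destruct Hz0 as [s0 [t0 Hz0]].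
  assert (neF : nonempty (fun y => exists z s t, Pz M F G x c d z s t /\ y = act M s z)).
  { exists (act M s0 z0). exists z0, s0, t0. auto. }
  assert (neG : nonempty (fun y => exists z s t, Pz M F G x c d z s t /\ y = act M t z)).
  { exists (act M t0 z0). exists z0, s0, t0. auto. }
  exists YF, YG. sp.
  - apply msup_le; auto. intros y (z & s & t & (A & B & C & D & E) & ->). auto.
  - apply msup_le; auto. intros y (z & s & t & (A & B & C & D & E) & ->).
    eapply mtr; [apply act_le|auto].
  - apply msup_le; auto. intros y (z & s & t & (A & B & C & D & E) & ->). auto.
  - apply msup_le; auto. intros y (z & s & t & (A & B & C & D & E) & ->).
    eapply mtr; [apply act_le|auto].
  - exists {p : M * qcar Q * qcar Q | Pz M F G x c d (fst (fst p)) (snd (fst p)) (snd p)},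
      (fun p => fst (fst (proj1_sig p))),
      (fun p => qsup Q (fun r => r = snd (fst (proj1_sig p)) \/ r = snd (proj1_sig p))).
    sp.
    + exact (inhabits (exist _ (z0, s0, t0) Hz0)).
    + eapply mtr; [exact Hx|]. apply msup_le. exists z0. exists s0, t0; auto.
      intros y (s & t & Hp). apply le_msup. exists (exist _ (y, s, t) Hp). auto.
    + intros [[[z s] t] Hp]; simpl. split.
      { destruct HF as [_ [Fup _]].
      apply (Fup s). apply Hp.
      apply (proj1 (qsup_lub Q _ (ex_intro _ s (or_introl eq_refl)))). auto. }
      destruct HG as [_ [Gup _]].
      apply (Gup t). apply Hp.
      apply (proj1 (qsup_lub Q _ (ex_intro _ s (or_introl eq_refl)))). auto.
    + intros [[[z s] t] Hp]; simpl.
      rewrite act_supl by (exists s; auto).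
      apply msup_le. exists (act M s z). exists s; auto.
      intros y [r [[-> | ->] ->]].
      * eapply mtr; [|apply mj_l]. apply le_msup. exists z, s, t. auto.
      * eapply mtr; [|apply mj_r]. apply le_msup. exists z, s, t. auto.
Qed.

Lemma main_ind {Q : Quantale} (M : QModule Q) (F G : qcar Q -> Prop) (b : M) :
  shrinkable M -> mfilter Q F -> mfilter Q G ->
  forall N k1 k2 x, k1 + k2 <= N ->
  prec_chain M F k1 x b -> prec_chain M G k2 x b ->
  prec_chain M (fun r => F r /\ G r) (k1 + k2) x b.
Proof.
  intros Hsh HF HG.
  assert (FG1 : F (qone Q) /\ G (qone Q)) by (split; [apply HF|apply HG]).
  induction N; intros k1 k2 x Hle C1 C2.
  - assert (k1 = 0) by lia. assert (k2 = 0) by lia. subst. simpl in *.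
    destruct (key M F G x b b Hsh HF HG C1 C2) as (YF & YG & A & B & C & D & E).
    eapply prec1_mono_r; eauto. apply mj_le; auto.
  - assert (Hstep : exists c, prec1 M F x c /\
        ((k1 = 0 /\ c = b) \/ exists k', k1 = S k' /\ prec_chain M F k' c b)).
    { destruct k1; simpl in C1. exists b; auto. destruct C1 as [c [P Q']]. exists c. split; eauto. }
    assert (Hstep2 : exists d, prec1 M G x d /\
        ((k2 = 0 /\ d = b) \/ exists k', k2 = S k' /\ prec_chain M G k' d b)).
    { destruct k2; simpl in C2. exists b; auto. destruct C2 as [c [P Q']]. exists c. split; eauto. }
    destruct Hstep as [c [P1 R1]]. destruct Hstep2 as [d [P2 R2]].
    destruct (key M F G x c d Hsh HF HG P1 P2) as (YF & YG & A & B & C & D & E).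
    destruct (k1 + k2) as [|K] eqn:EK.
    + assert (k1 = 0) by lia. assert (k2 = 0) by lia.
      destruct R1 as [[_ ->]|[k' [? _]]]; [|lia].
      destruct R2 as [[_ ->]|[k' [? _]]]; [|lia].
      simpl. eapply prec1_mono_r; eauto. apply mj_le; auto.
    + simpl. exists (mj M YF YG). split; auto. apply chain_join.
      idtac.
      * destruct R1 as [[_ ->]|[k' [-> R]]].
        -- apply chain_le; auto.
        -- replace K with (k' + k2) by lia. apply IHN. lia.
           apply (chain_mono_l M _ _ c); auto. apply (chain_mono_l M _ _ x); auto.
      * destruct R2 as [[_ ->]|[k' [-> R]]].
        -- apply chain_le; auto.
        -- replace K with (k1 + k') by lia. apply IHN. lia.
           apply (chain_mono_l M _ _ x); auto. apply (chain_mono_l M _ _ d); auto.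
Qed.

Theorem mainTheorem4 (Q : Quantale) (M : QModule Q) (F G : qcar Q -> Prop)
  (a b : M) (n m : nat) :
  shrinkable M -> mfilter Q F -> mfilter Q G ->
  1 <= n -> 1 <= m ->
  precn M F n a b -> precn M G m a b ->
  precn M (fun x => F x /\ G x) (n + m - 1) a b.
Proof.
  intros Hsh HF HG Hn Hm P1 P2. unfold precn in *.
  replace (n + m - 1 - 1) with ((n - 1) + (m - 1)) by lia.
  eapply main_ind; eauto.
Qed.
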